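(* Let $A\in\mathscr{B}(\Omega)$ satisfy $\underline{P}(A)=0$ and $\overline{P}(A)=1$. Then for any $B\in\mathscr{B}(\Omega)$ with $\underline{P}(B)>0$, $$\underline{P}_{\mathfrak{G}}(A\mid B)=0,\quad\overline{P}_{\mathfrak{G}}(A\mid B)=1,\quad \underline{P}_{\mathfrak{B}}(A\mid B)=0,\quad\overline{P}_{\mathfrak{B}}(A\mid B)=1.$$
   Context: $\Omega$ is a separable, completely metrizable space with Borel $\sigma$-algebra $\mathscr{B}(\Omega)$; $\underline{P}$ is a Choquet capacity of order 2 on $\mathscr{B}(\Omega)$ (a coherent lower probability with weakly compact set of dominating measures satisfying $\underline{P}(A\cup B)\ge\underline{P}(A)+\underline{P}(B)-\underline{P}(A\cap B)$); $\Pi=\{P:P\ge\underline{P}\}$, $\underline{P}(A)=\inf_{P\in\Pi}P(A)$, $\overline{P}(A)=\sup_{P\in\Pi}P(A)=1-\underline{P}(A^c)$. Generalized Bayes rule: $\underline{P}_{\mathfrak{B}}(A\mid B)=\inf_{P\in\Pi}P(A\cap B)/P(B)$, $\overline{P}_{\mathfrak{B}}(A\mid B)=\sup_{P\in\Pi}P(A\cap B)/P(B)$. Geometric rule: $\underline{P}_{\mathfrak{G}}(A\mid B)=\inf_{P\in\Pi}P(A\cap B)/\inf_{P\in\Pi}P(B)$, $\overline{P}_{\mathfrak{G}}(A\mid B)=1-\underline{P}_{\mathfrak{G}}(A^c\mid B)$. *)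

(* Defs.v *)
From HB Require Import structures.
From mathcomp Require Import all_boot all_order all_algebra.
From mathcomp Require Import all_classical all_reals all_analysis.
Set Implicit Arguments. Unset Strict Implicit. Unset Printing Implicit Defensive.
Import Order.TTheory GRing.Theory Num.Theory.
Import numFieldNormedType.Exports.
Local Open Scope classical_set_scope.
Local Open Scope ring_scope.

Definition Omega (T : ptopologicalType) := g_sigma_algebraType (@open T).

Definition separable_space (T : ptopologicalType) : Prop :=
  exists D : set T, countable D /\ closure D = setT.

Definition completely_metrizable (R : realType) (T : ptopologicalType) : Prop :=
  exists dist : T -> T -> R,
    [/\ (forall x y, 0 <= dist x y) /\
        (forall x y, (dist x y = 0) <-> (x = y)),
        (forall x y, dist x y = dist y x),
        (forall x y z, dist x z <= dist x y + dist y z),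
        (forall U : set T, (open U) <->
           (forall x, U x -> exists2 e : R, 0 < e & [set y | dist x y < e] `<=` U))
      & (forall u : nat -> T,
           (forall e : R, 0 < e -> exists N, forall m n, (N <= m)%N -> (N <= n)%N ->
                dist (u m) (u n) < e) ->
           exists l, forall e : R, 0 < e -> exists N, forall n, (N <= n)%N ->
                dist (u n) l < e)].

Section Capacity.
Context {R : realType} {T : ptopologicalType}.
Local Notation Om := (Omega T).
Local Notation prob := (probability Om R).

Definition weak_cvg (Pn : nat -> prob) (P : prob) : Prop :=
  forall f : T -> R, continuous f -> (exists M : R, forall x, `|f x| <= M) ->
    (fun n => (\int[Pn n]_x (f x)%:E)%E) @ \oo --> (\int[P]_x (f x)%:E)%E.

(* Weak compactness of a set of probability measures.  Since Omega is Polish,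
   the weak topology is metrizable, so compactness = sequential compactness. *)
Definition weakly_compact (Pi : set prob) : Prop :=
  forall Pn : nat -> prob, (forall n, Pi (Pn n)) ->
    exists2 phi : nat -> nat, (forall m n, (m < n)%N -> (phi m < phi n)%N) &
      exists2 P, Pi P & weak_cvg (Pn \o phi) P.

Definition core (LP : set Om -> R) : set prob :=
  [set P : prob | forall A : set Om, measurable A -> (LP A)%:E <= P A]%E.

Definition choquet2 (LP : set Om -> R) : Prop :=
  [/\ core LP !=set0,
      (forall A : set Om, measurable A ->
          LP A = inf [set fine (P A) | P in core LP]),
      weakly_compact (core LP)
    & (forall A B : set Om, measurable A -> measurable B ->
          LP A + LP B - LP (A `&` B) <= LP (A `|` B))].

Definition lowerP (LP : set Om -> R) (A : set Om) : R :=
  inf [set fine (P A) | P in core LP].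
Definition upperP (LP : set Om -> R) (A : set Om) : R :=
  sup [set fine (P A) | P in core LP].

Definition lowerB (LP : set Om -> R) (A B : set Om) : R :=
  inf [set fine (P (A `&` B)) / fine (P B) | P in core LP].
Definition upperB (LP : set Om -> R) (A B : set Om) : R :=
  sup [set fine (P (A `&` B)) / fine (P B) | P in core LP].

Definition lowerG (LP : set Om -> R) (A B : set Om) : R :=
  lowerP LP (A `&` B) / lowerP LP B.
Definition upperG (LP : set Om -> R) (A B : set Om) : R :=
  1 - lowerG LP (~` A) B.

End Capacity.

(* Main.v *)
Require Import Defs.
From HB Require Import structures.
From mathcomp Require Import all_boot all_order all_algebra.
From mathcomp Require Import all_classical all_reals all_analysis.
From mathcomp Require Import lra.
Import Order.TTheory GRing.Theory Num.Theory.
Import numFieldNormedType.Exports.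
Local Open Scope classical_set_scope.
Local Open Scope ring_scope.
Section H.
Context {d : measure_display} {T : measurableType d} {R : realType} (P : probability T R).

Lemma pE X : measurable X -> ((fine (P X))%:E = P X)%E.
Proof.
move=> mX; rewrite fineK //; apply: (@fin_num_measure _ _ _ P) => //.
Qed.

Lemma p01 X : measurable X -> 0 <= fine (P X) <= 1.
Proof.
move=> mX; rewrite -!lee_fin pE //; apply/andP; split => //.
exact: probability_le1.
Qed.

Lemma pmono X Y : measurable X -> measurable Y -> X `<=` Y -> fine (P X) <= fine (P Y).
Proof.
move=> mX mY XY; rewrite -lee_fin !pE //; apply: le_measure => //; rewrite inE //.
Qed.

Lemma pC X : measurable X -> fine (P (~` X)) = 1 - fine (P X).
Proof.
move=> mX; apply/eqP; rewrite -(@eqe R) pE; last exact: measurableC.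
by rewrite probability_setC // EFinB pE.
Qed.

Lemma psplit X Y : measurable X -> measurable Y ->
  fine (P Y) = fine (P (~` X `&` Y)) + fine (P (X `&` Y)).
Proof.
move=> mX mY; have mXY : measurable (X `&` Y) by apply: measurableI.
have mCXY : measurable (~` X `&` Y) by apply: measurableI => //; apply: measurableC.
apply/eqP; rewrite -(@eqe R) EFinD !pE //.
by rewrite (measureDI P mY mX) setDE setIC (setIC X).
Qed.
End H.
Theorem theorem5p8 (R : realType) (T : ptopologicalType)
  (HT : separable_space T /\ completely_metrizable R T)
  (LP : set (Omega T) -> R) (HLP : choquet2 LP)
  (A : set (Omega T)) (mA : measurable A)
  (hA0 : lowerP LP A = 0) (hA1 : upperP LP A = 1) :
  forall B : set (Omega T), measurable B -> 0 < lowerP LP B ->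
    [/\ lowerG LP A B = 0, upperG LP A B = 1,
        lowerB LP A B = 0 & upperB LP A B = 1].
Proof.
move=> B mB cpos.
case: HLP => [[P0 P0c] _ _ _].
have mC : measurable (~` A) by apply: measurableC.
have mAB : measurable (A `&` B) by apply: measurableI.
have mCB : measurable (~` A `&` B) by apply: measurableI.
have ne : forall f : probability (Omega T) R -> R,
    [set f P | P in core LP] !=set0.
  by move=> f; exists (f P0); exists P0.
have lowle : forall X, measurable X -> forall P, core LP P ->
    lowerP LP X <= fine (P X).
  move=> X mX P cP; apply: ge_inf; last by exists P.
  by exists 0 => _ [Q _ <-]; case/andP: (p01 Q _ mX).
have low0 : forall X, measurable X -> 0 <= lowerP LP X.
  move=> X mX; apply: lb_le_inf => // _ [Q _ <-]; by case/andP: (p01 Q _ mX).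
have smallA : forall e, 0 < e -> exists2 P, core LP P & fine (P A) < e.
  move=> e e0; have : lowerP LP A < e by rewrite hA0.
  by case/(inf_lt (ne _)) => _ [P cP <-] h; exists P.
have bigA : forall e, 0 < e -> exists2 P, core LP P & 1 - e < fine (P A).
  move=> e e0; have : 1 - e < upperP LP A by rewrite hA1 ltrBlDr ltrDl.
  by case/(sup_gt (ne _)) => _ [P cP <-] h; exists P.
set c := lowerP LP B.
have lAB : lowerP LP (A `&` B) = 0.
  apply/eqP; rewrite eq_le low0 // andbT; rewrite leNgt; apply/negP => h.
  case: (smallA _ h) => P cP hP.
  have := le_trans (lowle _ mAB P cP) (pmono P _ _ mAB mA (@subIsetl _ _ _)).
  by rewrite leNgt hP.
have lCB : lowerP LP (~` A `&` B) = 0.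
  apply/eqP; rewrite eq_le low0 // andbT; rewrite leNgt; apply/negP => h.
  case: (bigA _ h) => P cP hP.
  have := le_trans (lowle _ mCB P cP) (pmono P _ _ mCB mC (@subIsetl _ _ _)).
  rewrite pC // => h2; move: hP; rewrite ltrBlDr -ltrBlDl.
  by rewrite ltNge h2.
split.
- by rewrite /lowerG lAB mul0r.
- by rewrite /upperG /lowerG lCB mul0r subr0.
- apply/eqP; rewrite eq_le; apply/andP; split; last first.
    apply: lb_le_inf => // _ [P cP <-].
    by apply: divr_ge0; [case/andP: (p01 P _ mAB)|case/andP: (p01 P _ mB)].
  rewrite leNgt; apply/negP => h.
  have := mulr_gt0 h cpos; case/smallA => P cP hP.
  have cB := lowle _ mB P cP; have pB0 : 0 < fine (P B) by apply: lt_le_trans cB.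
  have : lowerB LP A B <= fine (P (A `&` B)) / fine (P B).
    apply: ge_inf; last by exists P.
    exists 0 => _ [Q _ <-].
    by apply: divr_ge0; [case/andP: (p01 Q _ mAB)|case/andP: (p01 Q _ mB)].
  rewrite ler_pdivlMr // => h2.
  have h3 := pmono P _ _ mAB mA (@subIsetl _ _ _).
  have h4 : lowerB LP A B * c <= lowerB LP A B * fine (P B) by rewrite ler_wpM2l // ltW.
  lra.
- have ub1 : forall P, core LP P -> fine (P (A `&` B)) / fine (P B) <= 1.
    move=> P cP; have cB := lowle _ mB P cP.
    have pB0 : 0 < fine (P B) by apply: lt_le_trans cB.
    by rewrite ler_pdivrMr // mul1r; apply: pmono => //; apply: subIsetr.
  apply/eqP; rewrite eq_le; apply/andP; split.
    by apply: ge_sup => // _ [P cP <-]; apply: ub1.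
  rewrite leNgt; apply/negP => h.
  have h' : 0 < 1 - upperB LP A B by rewrite subr_gt0.
  have := mulr_gt0 h' cpos.
  case/bigA => P cP hP.
  have cB := lowle _ mB P cP; have pB0 : 0 < fine (P B) by apply: lt_le_trans cB.
  have : fine (P (A `&` B)) / fine (P B) <= upperB LP A B.
    apply: ub_le_sup; last by exists P.
    by exists 1 => _ [Q cQ <-]; apply: ub1.
  rewrite ler_pdivrMr // => h2.
  have h3 := pmono P _ _ mCB mC (@subIsetl _ _ _).
  rewrite pC // in h3.
  have h5 := psplit P _ _ mA mB.
  have h4 : (1 - upperB LP A B) * c <= (1 - upperB LP A B) * fine (P B).
    by rewrite ler_wpM2l // subr_ge0 ltW.
  lra.
Qed.
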